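(* Let $\mathcal S$ and $\mathcal T$ be additive categories and let $T:\mathcal S\to\mathcal T$ be an additive functor. (a) If $T$ has a left adjoint $S_\ell$, then an object $Q$ of $\mathcal S$ is $T$-relative projective if and only if the counit $\eta_Q:S_\ell TQ\to Q$ of the adjunction is an epimorphism. Any object of $\mathrm{add}(\mathrm{im}(S_\ell))$ is $T$-relative projective. (b) If $T$ has a right adjoint $S_r$, then an object $Q$ of $\mathcal S$ is $T$-relative injective if and only if the unit $\epsilon_Q:Q\to S_rTQ$ of the adjunction is a monomorphism. Any object of $\mathrm{add}(\mathrm{im}(S_r))$ is $T$-relative injective.
   Context: An object $Q$ of $\mathcal S$ is $T$-relative projective if the natural transformation $\mathcal S(Q,-)\to\mathcal T(TQ,T-)$ induced by $T$ is injective (componentwise), and $T$-relative injective if the natural transformation $\mathcal S(-,Q)\to\mathcal T(T-,TQ)$ induced by $T$ is injective. $\mathrm{add}(\mathrm{im}(F))$ denotes the full subcategory of direct summands of finite direct sums of objects in the image of $F$. *)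

(* Defs.v *)
From HB Require Import structures.
From mathcomp Require Import all_boot all_algebra.
Set Implicit Arguments. Unset Strict Implicit. Unset Printing Implicit Defensive.
Import GRing.Theory.
Local Open Scope ring_scope.

Record category := Category {
  Ob : Type;
  Hom : Ob -> Ob -> zmodType;
  idm : forall A, Hom A A;
  comp : forall A B C, Hom B C -> Hom A B -> Hom A C;
  comp1m : forall A B (f : Hom A B), comp (idm B) f = f;
  compm1 : forall A B (f : Hom A B), comp f (idm A) = f;
  compA : forall A B C D (h : Hom C D) (g : Hom B C) (f : Hom A B),
    comp h (comp g f) = comp (comp h g) f
}.
Arguments Hom : clear implicits.
Arguments idm {c} A.
Arguments comp {c A B C}.

Definition preadditive (C : category) : Prop :=
  (forall A B D (g1 g2 : Hom C B D) (f : Hom C A B),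
      comp (g1 + g2) f = comp g1 f + comp g2 f) /\
  (forall A B D (g : Hom C B D) (f1 f2 : Hom C A B),
      comp g (f1 + f2) = comp g f1 + comp g f2).

Definition is_zero_object (C : category) (Z : Ob C) : Prop := idm Z = 0.

Definition is_biproduct (C : category) (A B X : Ob C)
  (i1 : Hom C A X) (i2 : Hom C B X) (p1 : Hom C X A) (p2 : Hom C X B) : Prop :=
  [/\ comp p1 i1 = idm A, comp p2 i2 = idm B, comp p1 i2 = 0, comp p2 i1 = 0
    & comp i1 p1 + comp i2 p2 = idm X].

Definition has_biproduct (C : category) (A B X : Ob C) : Prop :=
  exists i1 i2 p1 p2, @is_biproduct C A B X i1 i2 p1 p2.

Definition additive (C : category) : Prop :=
  [/\ preadditive C, exists Z : Ob C, is_zero_object Z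
    & forall A B : Ob C, exists X : Ob C, has_biproduct A B X].

Record functor (C D : category) := Functor {
  fobj : Ob C -> Ob D;
  fmap : forall A B, Hom C A B -> Hom D (fobj A) (fobj B);
  fmap1 : forall A, fmap (idm A) = idm (fobj A);
  fmapM : forall A B E (g : Hom C B E) (f : Hom C A B),
    fmap (comp g f) = comp (fmap g) (fmap f)
}.
Arguments fobj {C D}.
Arguments fmap {C D} _ {A B}.

Definition additive_functor (C D : category) (F : functor C D) : Prop :=
  forall A B (f g : Hom C A B), fmap F (f + g) = fmap F f + fmap F g.

Definition is_adjunction (C D : category) (L : functor C D) (R : functor D C)
  (unit : forall c : Ob C, Hom C c (fobj R (fobj L c)))
  (counit : forall d : Ob D, Hom D (fobj L (fobj R d)) d) : Prop :=
  [/\ (forall c c' (f : Hom C c c'),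
         comp (unit c') f = comp (fmap R (fmap L f)) (unit c)),
      (forall d d' (g : Hom D d d'),
         comp (counit d') (fmap L (fmap R g)) = comp g (counit d)),
      (forall c, comp (counit (fobj L c)) (fmap L (unit c)) = idm (fobj L c))
    & (forall d, comp (fmap R (counit d)) (unit (fobj R d)) = idm (fobj R d))].

Definition epimorphism (C : category) (A B : Ob C) (e : Hom C A B) : Prop :=
  forall Z (f g : Hom C B Z), comp f e = comp g e -> f = g.

Definition monomorphism (C : category) (A B : Ob C) (m : Hom C A B) : Prop :=
  forall Z (f g : Hom C Z A), comp m f = comp m g -> f = g.

(* T-relative projective / injective: the maps induced by T on hom-sets
   S(Q,-) -> T(TQ,T-) (resp. S(-,Q) -> T(T-,TQ)) are injective. *)
Definition rel_projective (S T : category) (F : functor S T) (Q : Ob S) : Prop :=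
  forall X : Ob S, injective (fun f : Hom S Q X => fmap F f).

Definition rel_injective (S T : category) (F : functor S T) (Q : Ob S) : Prop :=
  forall X : Ob S, injective (fun f : Hom S X Q => fmap F f).

Inductive fin_direct_sum (C : category) (P : Ob C -> Prop) : Ob C -> Prop :=
  | fds_zero : forall Z, is_zero_object Z -> fin_direct_sum P Z
  | fds_cons : forall A B X, P A -> fin_direct_sum P B ->
      has_biproduct A B X -> fin_direct_sum P X.

Definition direct_summand (C : category) (Q X : Ob C) : Prop :=
  exists (i : Hom C Q X) (p : Hom C X Q), comp p i = idm Q.

Definition in_add_im (D C : category) (F : functor D C) (Q : Ob C) : Prop :=
  exists X, fin_direct_sum (fun A => exists Y, A = fobj F Y) X /\
            direct_summand Q X.

Arguments is_adjunction {C D} L R unit counit.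
Arguments epimorphism {C A B} e.
Arguments monomorphism {C A B} m.
Arguments rel_projective {S T} F Q.
Arguments rel_injective {S T} F Q.
Arguments in_add_im {D C} F Q.
Arguments additive_functor {C D} F.

(* Main.v *)
Require Import Defs.
From mathcomp Require Import all_boot ssralg.

Local Open Scope ring_scope.
Local Notation comp := (@Defs.comp _ _ _ _).
Local Notation compA := Defs.compA.
Local Notation comp1m := Defs.comp1m.
Local Notation compm1 := Defs.compm1.

Section Aux.
Variables (S T : category) (F : functor S T).
Hypothesis pS : preadditive S.

Lemma compm0 A B D (g : Hom S B D) : comp g (0 : Hom S A B) = 0.
Proof.
case: pS => _ H2; have h := H2 _ _ _ g (0 : Hom S A B) 0.
rewrite GRing.addr0 in h; apply: (@GRing.addrI _ (comp g 0)); by rewrite GRing.addr0 -h.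
Qed.

Lemma comp0m A B D (f : Hom S A B) : comp (0 : Hom S B D) f = 0.
Proof.
case: pS => H1 _; have h := H1 _ _ _ (0 : Hom S B D) 0 f.
rewrite GRing.addr0 in h; apply: (@GRing.addrI _ (comp 0 f)); by rewrite GRing.addr0 -h.
Qed.

Lemma proj_zero Z : is_zero_object Z -> rel_projective F Z.
Proof.
move=> hZ X f g _ /=.
by rewrite -(compm1 f) -(compm1 g) hZ !compm0.
Qed.

Lemma inj_zero Z : is_zero_object Z -> rel_injective F Z.
Proof.
move=> hZ X f g _ /=.
by rewrite -(comp1m f) -(comp1m g) hZ !comp0m.
Qed.

Lemma proj_biprod A B X : has_biproduct A B X ->
  rel_projective F A -> rel_projective F B -> rel_projective F X.
Proof.
case=> i1 [i2 [p1 [p2 [h1 h2 h3 h4 h5]]]] PA PB Z f g /= e.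
have e1 : comp f i1 = comp g i1 by apply: PA => /=; rewrite !fmapM e.
have e2 : comp f i2 = comp g i2 by apply: PB => /=; rewrite !fmapM e.
case: pS => _ H2.
by rewrite -(compm1 f) -(compm1 g) -h5 !H2 !compA e1 e2.
Qed.

Lemma inj_biprod A B X : has_biproduct A B X ->
  rel_injective F A -> rel_injective F B -> rel_injective F X.
Proof.
case=> i1 [i2 [p1 [p2 [h1 h2 h3 h4 h5]]]] PA PB Z f g /= e.
have e1 : comp p1 f = comp p1 g by apply: PA => /=; rewrite !fmapM e.
have e2 : comp p2 f = comp p2 g by apply: PB => /=; rewrite !fmapM e.
case: pS => H1 _.
by rewrite -(comp1m f) -(comp1m g) -h5 !H1 -!compA e1 e2.
Qed.

Lemma proj_summand Q X : direct_summand Q X -> rel_projective F X ->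
  rel_projective F Q.
Proof.
case=> i [p hpi] PX Z f g /= e.
have : comp f p = comp g p by apply: PX => /=; rewrite !fmapM e.
move=> e'; by rewrite -(compm1 f) -(compm1 g) -hpi !compA e'.
Qed.

Lemma inj_summand Q X : direct_summand Q X -> rel_injective F X ->
  rel_injective F Q.
Proof.
case=> i [p hpi] PX Z f g /= e.
have : comp i f = comp i g by apply: PX => /=; rewrite !fmapM e.
move=> e'; by rewrite -(comp1m f) -(comp1m g) -hpi -!compA e'.
Qed.

Lemma proj_fds (P : Ob S -> Prop) : (forall A, P A -> rel_projective F A) ->
  forall X, fin_direct_sum P X -> rel_projective F X.
Proof.
move=> HP X; elim=> [Z hZ|A B Y PA _ IH hb]; first exact: proj_zero.
exact: proj_biprod hb (HP _ PA) IH.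
Qed.

Lemma inj_fds (P : Ob S -> Prop) : (forall A, P A -> rel_injective F A) ->
  forall X, fin_direct_sum P X -> rel_injective F X.
Proof.
move=> HP X; elim=> [Z hZ|A B Y PA _ IH hb]; first exact: inj_zero.
exact: inj_biprod hb (HP _ PA) IH.
Qed.

End Aux.

Theorem lemma2p6 (S T : category) (F : functor S T) :
  additive S -> additive T -> additive_functor F ->
  (forall (Sl : functor T S)
          (unit : forall Y : Ob T, Hom T Y (fobj F (fobj Sl Y)))
          (counit : forall Q : Ob S, Hom S (fobj Sl (fobj F Q)) Q),
      is_adjunction Sl F unit counit ->
      (forall Q : Ob S, rel_projective F Q <-> epimorphism (counit Q)) /\
      (forall Q : Ob S, in_add_im Sl Q -> rel_projective F Q)) /\
  (forall (Sr : functor T S)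
          (unit : forall Q : Ob S, Hom S Q (fobj Sr (fobj F Q)))
          (counit : forall Y : Ob T, Hom T (fobj F (fobj Sr Y)) Y),
      is_adjunction F Sr unit counit ->
      (forall Q : Ob S, rel_injective F Q <-> monomorphism (unit Q)) /\
      (forall Q : Ob S, in_add_im Sr Q -> rel_injective F Q)).
Proof.
case=> pS _ _ _ _; split.
- move=> Sl un co [n1 n2 t1 t2].
  have key : forall Q, rel_projective F Q <-> epimorphism (co Q).
    move=> Q; split.
    + move=> PQ Z f g e; apply: PQ => /=.
      by rewrite -(compm1 (fmap F f)) -(compm1 (fmap F g)) -t2 !compA
        -!fmapM e.
    + move=> EQ X f g /= e; apply: EQ.
      by rewrite -!n2 e.
  split=> // Q [X [hX hQ]]; apply: proj_summand hQ _.
  apply: (@proj_fds _ _ F pS) hX => _ [Y ->]; apply/key => Z f g e.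
  by rewrite -(compm1 f) -(compm1 g) -t1 !compA e.
- move=> Sr un co [n1 n2 t1 t2].
  have key : forall Q, rel_injective F Q <-> monomorphism (un Q).
    move=> Q; split.
    + move=> PQ Z f g e; apply: PQ => /=.
      by rewrite -(comp1m (fmap F f)) -(comp1m (fmap F g)) -t1 -!compA
        -!fmapM e.
    + move=> MQ X f g /= e; apply: MQ.
      by rewrite !n1 e.
  split=> // Q [X [hX hQ]]; apply: inj_summand hQ _.
  apply: (@inj_fds _ _ F pS) hX => _ [Y ->]; apply/key => Z f g e.
  by rewrite -(comp1m f) -(comp1m g) -t2 -!compA e.
Qed.
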